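(* For $s\in\mathcal S^{2,2}$ write $V^n(s)=(x^{(n)},y^{(n)},u^{(n)},v^{(n)})$. Then: 1. $\frac{5}{12}\le x^{(2)}+y^{(2)}\le\frac12$ for every $s\in\mathcal S^{2,2}$; 2. there exists $\alpha\in(0,1)$ such that $v^{(n+1)}\le\alpha\,y^{(n)}$ for every $s\in\mathcal S^{2,2}$ and every $n\ge2$.
   Context: $\mathcal S^{2,2}=\{(x,y,u,v)\in\mathbb{R}^4: x,y,u,v\ge0,\ x+y+u+v=1,\ x+y>0,\ u+v>0\}$. $V:\mathcal S^{2,2}\to\mathcal S^{2,2}$ is $V(x,y,u,v)=(x',y',u',v')$ with $x'=\dfrac{2xu+yu}{4(x+y)(u+v)}$, $y'=\dfrac{6xv+3yu+4yv}{12(x+y)(u+v)}$, $u'=\dfrac{6xu+6xv+3yu+4yv}{12(x+y)(u+v)}$, $v'=\dfrac{3yu+4yv}{12(x+y)(u+v)}$. $V^n$ denotes the $n$-fold iterate. *)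

(* Defs.v *)
From Stdlib Require Import Reals.
Open Scope R_scope.

Record pt4 : Type := mk4 { px : R; py : R; pu : R; pv : R }.

Definition inS22 (s : pt4) : Prop :=
  0 <= px s /\ 0 <= py s /\ 0 <= pu s /\ 0 <= pv s /\
  px s + py s + pu s + pv s = 1 /\
  px s + py s > 0 /\ pu s + pv s > 0.

(* The evolution operator V (total function on R^4; only used on S^{2,2},
   where the denominators are nonzero). *)
Definition V (s : pt4) : pt4 :=
  let x := px s in let y := py s in let u := pu s in let v := pv s in
  let d := (x + y) * (u + v) in
  mk4 ((2 * x * u + y * u) / (4 * d))
      ((6 * x * v + 3 * y * u + 4 * y * v) / (12 * d))
      ((6 * x * u + 6 * x * v + 3 * y * u + 4 * y * v) / (12 * d))
      ((3 * y * u + 4 * y * v) / (12 * d)).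

Fixpoint Vn (n : nat) (s : pt4) : pt4 :=
  match n with
  | O => s
  | S k => V (Vn k s)
  end.

(* Main.v *)
Require Import Defs.
From Stdlib Require Import Reals Lra Psatz.
Open Scope R_scope.

Lemma Veqs s : inS22 s ->
  let d := (px s + py s) * (pu s + pv s) in
  0 < d /\
  px (V s) * (12 * d) = 3 * (2 * px s * pu s + py s * pu s) /\
  py (V s) * (12 * d) = 6 * px s * pv s + 3 * py s * pu s + 4 * py s * pv s /\
  pu (V s) * (12 * d) = 6 * px s * pu s + 6 * px s * pv s + 3 * py s * pu s + 4 * py s * pv s /\
  pv (V s) * (12 * d) = 3 * py s * pu s + 4 * py s * pv s.
Proof.
  intros H d. destruct H as (H1&H2&H3&H4&H5&H6&H7).
  assert (Hd : 0 < d) by (unfold d; nra).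
  unfold V; simpl. fold d.
  repeat split; try lra; field; lra.
Qed.

Lemma pos_from (a k : R) : 0 < k -> 0 <= a * k -> 0 <= a.
Proof. intros. nra. Qed.

Lemma L1 s : inS22 s ->
  inS22 (V s) /\ pv (V s) <= pu (V s) /\ px (V s) + py (V s) <= 1/2.
Proof.
  intro H. destruct (Veqs s H) as (Hd&E1&E2&E3&E4).
  set (d := (px s + py s) * (pu s + pv s)) in *.
  destruct H as (H1&H2&H3&H4&H5&H6&H7).
  assert (K : 0 < 12 * d) by lra.
  assert (A1 : 0 <= px (V s)) by (apply (pos_from _ _ K); rewrite E1; nra).
  assert (A2 : 0 <= py (V s)) by (apply (pos_from _ _ K); rewrite E2; nra).
  assert (A3 : 0 <= pu (V s)) by (apply (pos_from _ _ K); rewrite E3; nra).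
  assert (A4 : 0 <= pv (V s)) by (apply (pos_from _ _ K); rewrite E4; nra).
  assert (S : (px (V s) + py (V s) + pu (V s) + pv (V s) - 1) * (12 * d) = 0).
  { unfold d in *. nra. }
  assert (S' : px (V s) + py (V s) + pu (V s) + pv (V s) = 1).
  { apply Rmult_integral in S; lra. }
  assert (B : 0 <= (pu (V s) - pv (V s)) * (12 * d)) by nra.
  assert (B' : 0 <= pu (V s) - pv (V s)) by (apply (pos_from _ _ K); exact B).
  assert (C : 0 <= (1/2 - px (V s) - py (V s)) * (12 * d)) by (unfold d in *; nra).
  assert (C' : 0 <= 1/2 - px (V s) - py (V s)) by (apply (pos_from _ _ K); exact C).
  assert (D : 0 <= (px (V s) + py (V s) - 1/3) * (12 * d)) by (unfold d in *; nra).
  assert (D' : 0 <= px (V s) + py (V s) - 1/3) by (apply (pos_from _ _ K); exact D).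
  unfold inS22; repeat split; lra.
Qed.

Lemma L2 s : inS22 s -> pv s <= pu s -> 5/12 <= px (V s) + py (V s).
Proof.
  intros H Hvu. destruct (Veqs s H) as (Hd&E1&E2&E3&E4).
  set (d := (px s + py s) * (pu s + pv s)) in *.
  destruct H as (H1&H2&H3&H4&H5&H6&H7).
  assert (K : 0 < 12 * d) by lra.
  assert (D : 0 <= (px (V s) + py (V s) - 5/12) * (12 * d)).
  { rewrite Rmult_minus_distr_r, Rmult_plus_distr_r, E1, E2. unfold d.
    assert (0 <= py s * (pu s - pv s)) by nra. nra. }
  apply (pos_from _ _ K) in D. lra.
Qed.

Lemma L3 s : inS22 s -> 5/12 <= px s + py s -> pv (V s) <= 4/5 * py s.
Proof.
  intros H Hs. destruct (Veqs s H) as (Hd&E1&E2&E3&E4).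
  set (d := (px s + py s) * (pu s + pv s)) in *.
  destruct H as (H1&H2&H3&H4&H5&H6&H7).
  assert (K : 0 < 12 * d) by lra.
  assert (D : 0 <= (4/5 * py s - pv (V s)) * (12 * d)).
  { rewrite Rmult_minus_distr_r, E4. unfold d.
    assert (0 <= (px s + py s - 5/12) * (py s * (pu s + pv s))).
    { apply Rmult_le_pos; nra. }
    nra. }
  apply (pos_from _ _ K) in D. lra.
Qed.

Lemma Vn_S22 n s : inS22 s -> inS22 (Vn n s).
Proof. intro H; induction n; simpl; [exact H | apply L1; exact IHn]. Qed.

Theorem lemma4p2 :
  (forall s : pt4, inS22 s ->
     5 / 12 <= px (Vn 2 s) + py (Vn 2 s) <= 1 / 2) /\
  (exists alpha : R, 0 < alpha < 1 /\
     forall (s : pt4) (n : nat), inS22 s -> (2 <= n)%nat ->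
       pv (Vn (S n) s) <= alpha * py (Vn n s)).
Proof.
  split.
  - intros s H. change (Vn 2 s) with (V (V s)). destruct (L1 s H) as (H1&H2&_).
    split; [apply L2; assumption | apply L1; assumption].
  - exists (4/5). split; [lra|].
    intros s n H Hn. destruct n as [|[|m]]; try lia.
    change (Vn (S (S (S m))) s) with (V (Vn (S (S m)) s)). apply L3. apply L1, L1, Vn_S22, H.
    pose proof (Vn_S22 m s H) as Hm.
    destruct (L1 _ Hm) as (Hm1&Hm2&_).
    apply L2; assumption.
Qed.
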